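(* Let $A_1,A_2,B,D\in\mathbb R^{n\times n}$ and $K,L_0,L_1,L_2,\delta>0$ satisfy: (i) $A_1+A_1^\top$, $A_2+A_2^\top$ and $B+B^\top$ are positive semidefinite; (ii) $\|A_1\|_\sigma,\|A_2\|_\sigma,\|B\|_\sigma\le L_0\le 1/106$; (iii) $D+D^\top\preceq L_1(B^\top B+A_1A_1^\top)+K\delta^2 I$; (iv) $D^\top D\preceq L_2 B^\top B$; (v) $10L_0+\frac{4L_2}{L_0^2}+5L_1\le 24/50$; (vi) $\|X-Y\|_\sigma\le\delta$ for any two $X,Y\in\{A_1,A_2,B\}$. Then $$\|I-A_1+A_2B+D\|_\sigma\le\sqrt{1+(400+K)\delta^2}.$$
   Context: $\|\cdot\|_\sigma$ is the spectral norm; for symmetric matrices $S\preceq T$ means $T-S$ is positive semidefinite. *)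

(* Defs.v *)
From HB Require Import structures.
From mathcomp Require Import all_boot all_order all_algebra.
From mathcomp Require Import boolp classical_sets reals.
Set Implicit Arguments. Unset Strict Implicit. Unset Printing Implicit Defensive.
Import Order.TTheory GRing.Theory Num.Theory.
Local Open Scope ring_scope.
Local Open Scope classical_set_scope.

Definition vnorm (R : realType) (n : nat) (x : 'cV[R]_n) : R :=
  Num.sqrt (\sum_(i < n) x i 0 ^+ 2).

Definition specnorm (R : realType) (n : nat) (M : 'M[R]_n) : R :=
  sup [set vnorm (M *m x) | x in [set x : 'cV[R]_n | vnorm x <= 1]].

Definition psd (R : realType) (n : nat) (M : 'M[R]_n) : Prop :=
  forall x : 'cV[R]_n, 0 <= (x^T *m M *m x) 0 0.

Definition loewner_le (R : realType) (n : nat) (S T : 'M[R]_n) : Prop :=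
  psd (T - S).

(* Main.v *)
Require Import Defs.
From HB Require Import structures.
From mathcomp Require Import all_boot all_order all_algebra.
From mathcomp Require Import boolp classical_sets reals.
From mathcomp Require Import ring lra.
Import Order.TTheory GRing.Theory Num.Theory.
Local Open Scope ring_scope.

Definition dot {R : realType} {n : nat} (a b : 'cV[R]_n) : R := (a^T *m b) 0 0.

Lemma dotE {R : realType} {n : nat} (a b : 'cV[R]_n) :
  dot a b = \sum_(i < n) a i 0 * b i 0.
Proof. by rewrite /dot mxE; apply: eq_bigr => i _; rewrite mxE. Qed.

Lemma dotC {R : realType} {n : nat} (a b : 'cV[R]_n) : dot a b = dot b a.
Proof. by rewrite !dotE; apply: eq_bigr => i _; rewrite mulrC. Qed.

Lemma dotDl {R : realType} {n : nat} (a b c : 'cV[R]_n) :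
  dot (a + b) c = dot a c + dot b c.
Proof. by rewrite !dotE -big_split; apply: eq_bigr => i _; rewrite mxE mulrDl. Qed.

Lemma dotDr {R : realType} {n : nat} (a b c : 'cV[R]_n) :
  dot c (a + b) = dot c a + dot c b.
Proof. by rewrite dotC dotDl !(dotC c). Qed.

Lemma dotNl {R : realType} {n : nat} (a c : 'cV[R]_n) : dot (- a) c = - dot a c.
Proof. by rewrite !dotE -sumrN; apply: eq_bigr => i _; rewrite mxE mulNr. Qed.

Lemma dotNr {R : realType} {n : nat} (a c : 'cV[R]_n) : dot c (- a) = - dot c a.
Proof. by rewrite dotC dotNl dotC. Qed.

Lemma dotZl {R : realType} {n : nat} (k : R) (a c : 'cV[R]_n) : dot (k *: a) c = k * dot a c.
Proof. by rewrite !dotE mulr_sumr; apply: eq_bigr => i _; rewrite mxE mulrA. Qed.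

Lemma dotZr {R : realType} {n : nat} (k : R) (a c : 'cV[R]_n) : dot c (k *: a) = k * dot c a.
Proof. by rewrite dotC dotZl dotC. Qed.

Lemma dot_mul {R : realType} {n : nat} (M : 'M[R]_n) (a b : 'cV[R]_n) :
  dot (M *m a) b = dot a (M^T *m b).
Proof. by rewrite /dot trmx_mul mulmxA. Qed.

Lemma nsq_ge0 {R : realType} {n : nat} (a : 'cV[R]_n) : 0 <= dot a a.
Proof. by rewrite dotE; apply: sumr_ge0 => i _; rewrite -expr2 sqr_ge0. Qed.

Lemma vnormE {R : realType} {n : nat} (a : 'cV[R]_n) : vnorm a = Num.sqrt (dot a a).
Proof. by rewrite /vnorm dotE; congr Num.sqrt; apply: eq_bigr => i _; rewrite expr2. Qed.

Lemma psdE {R : realType} {n : nat} (M : 'M[R]_n) (x : 'cV[R]_n) :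
  (x^T *m M *m x) 0 0 = dot x (M *m x).
Proof. by rewrite /dot mulmxA. Qed.

Lemma amgm_sc {R : realType} (k p q : R) : 2 * k * (p * q) <= k ^+ 2 * (p * p) + q * q.
Proof.
have h : 0 <= (k * p - q) * (k * p - q) by rewrite -expr2 sqr_ge0.
rewrite expr2; move: h; set s := k * p.
have -> : 2 * k * (p * q) = 2 * (s * q) by rewrite /s; ring.
have -> : k * k * (p * p) = s * s by rewrite /s; ring.
move=> h; nra.
Qed.

Lemma amgm {R : realType} {n : nat} (k : R) (a b : 'cV[R]_n) :
  2 * k * dot a b <= k ^+ 2 * dot a a + dot b b.
Proof.
rewrite !dotE mulr_sumr mulr_sumr -big_split; apply: ler_sum => i _.
exact: amgm_sc.
Qed.

Lemma nsq0 {R : realType} {n : nat} (a : 'cV[R]_n) : dot a a = 0 -> a = 0.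
Proof.
rewrite dotE => /eqP; rewrite psumr_eq0 => [/allP H|i _]; last by rewrite -expr2 sqr_ge0.
apply/matrixP => i j; rewrite ord1 mxE.
have := H i (mem_index_enum i); rewrite /= mulf_eq0 orbb => /eqP //.
Qed.
Lemma sqrt_le_sq {R : realType} (z L : R) : 0 <= z -> 0 <= L -> Num.sqrt z <= L -> z <= L ^+ 2.
Proof.
move=> hz hL h; rewrite -(sqr_sqrtr hz); rewrite ler_sqr ?nnegrE ?sqrtr_ge0 //.
Qed.

Lemma sn_has_sup {R : realType} {n : nat} (M : 'M[R]_n) :
  has_sup [set vnorm (M *m x) | x in [set x : 'cV[R]_n | vnorm x <= 1]].
Proof.
split.
  exists (vnorm (M *m 0)); exists 0 => //=.
  by rewrite /vnorm big1 ?sqrtr0 // => i _; rewrite mxE expr0n.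
exists (Num.sqrt (\sum_(i < n) (\sum_(j < n) `|M i j|) ^+ 2)).
move=> _ [x /= hx <-].
rewrite /vnorm ler_sqrt; last by apply: sumr_ge0 => i _; rewrite sqr_ge0.
apply: ler_sum => i _.
have hxj : forall j, `|x j 0| <= 1.
  move=> j.
  have h1 : \sum_(k < n) x k 0 ^+ 2 <= 1.
    by rewrite -(@ler_sqrt _ _ 1) // sqrtr1.
  have h2 : x j 0 ^+ 2 <= \sum_(k < n) x k 0 ^+ 2.
    rewrite (bigD1 j) //= lerDl; apply: sumr_ge0 => k _; exact: sqr_ge0.
  rewrite -(expr_le1 (n:=2)) // real_normK ?num_real //; exact: le_trans h2 h1.
rewrite -real_normK ?num_real // ler_sqr ?nnegrE ?sumr_ge0 //.
rewrite mxE; apply: (le_trans (ler_norm_sum _ _ _)); apply: ler_sum => j _.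
by rewrite normrM; apply: ler_piMr.
Qed.

Lemma sn_le {R : realType} {n : nat} (M : 'M[R]_n) (x : 'cV[R]_n) :
  vnorm x <= 1 -> vnorm (M *m x) <= specnorm M.
Proof.
move=> hx; have [_ _] := sn_has_sup M.
by apply: (sup_upper_bound (sn_has_sup M)); exists x.
Qed.
Lemma dot0 {R : realType} {n : nat} : dot (0 : 'cV[R]_n) 0 = 0.
Proof. by rewrite dotE big1 // => i _; rewrite mxE mul0r. Qed.

Lemma sn_ge0 {R : realType} {n : nat} (M : 'M[R]_n) : 0 <= specnorm M.
Proof.
apply: le_trans (@sn_le _ _ M 0 _); first by rewrite vnormE sqrtr_ge0.
by rewrite vnormE dot0 sqrtr0.
Qed.

Lemma sn_sq {R : realType} {n : nat} (M : 'M[R]_n) (L : R) (x : 'cV[R]_n) :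
  specnorm M <= L -> dot (M *m x) (M *m x) <= L ^+ 2 * dot x x.
Proof.
move=> hL; have L0 : 0 <= L := le_trans (sn_ge0 M) hL.
have [s0|sp] := eqVneq (dot x x) 0.
  by rewrite (nsq0 _ s0) mulmx0 !dot0 mulr0.
have spos : 0 < dot x x by rewrite lt_def sp nsq_ge0.
set r := Num.sqrt (dot x x).
have rpos : 0 < r by rewrite sqrtr_gt0.
have rr : r * r = dot x x by rewrite -expr2 sqr_sqrtr // ltW.
have hy : vnorm (r^-1 *: x) <= 1.
  rewrite vnormE dotZl dotZr mulrA -invfM rr mulVf // sqrtr1 //.
have := sn_le M _ hy; rewrite -scalemxAr vnormE dotZl dotZr mulrA -invfM rr => h.
have iv : 0 <= (dot x x)^-1 by rewrite invr_ge0 ltW.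
have := le_trans h hL => /sqrt_le_sq.
move=> /(_ (mulr_ge0 iv (nsq_ge0 _)) L0).
rewrite ler_pdivrMl //. by rewrite mulrC.
Qed.

Lemma sn_sqT {R : realType} {n : nat} (M : 'M[R]_n) (L : R) (x : 'cV[R]_n) :
  0 < L -> specnorm M <= L -> dot (M^T *m x) (M^T *m x) <= L ^+ 2 * dot x x.
Proof.
move=> Lp hL.
set g := dot (M^T *m x) (M^T *m x).
have e : g = dot x (M *m (M^T *m x)).
  by rewrite /g dot_mul trmxK.
have h1 := amgm (L ^+ 2) x (M *m (M^T *m x)).
have h2 := sn_sq M L (M^T *m x) hL.
rewrite -e in h1.
have hg : 0 <= g by apply: nsq_ge0.
have hx : 0 <= dot x x by apply: nsq_ge0.
have L2 : 0 < L ^+ 2 by rewrite exprn_gt0.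
move: h1 h2; rewrite -/g; set t := dot x x; set l := L ^+ 2.
set h := dot _ _. move=> h1 h2.
have : 2 * l * g <= l * l * t + l * g.
  apply: (le_trans h1); rewrite expr2 lerD2l //.
move=> h3.
have : l * g <= l * (l * t) by nra.
by rewrite ler_pM2l.
Qed.
Lemma psd_bound {R : realType} {n : nat} (Q : 'M[R]_n) (c : R) (x : 'cV[R]_n) :
  0 < c -> Q^T = Q -> psd Q -> (forall z, dot (Q *m z) (Q *m z) <= c ^+ 2 * dot z z) ->
  dot (Q *m x) (Q *m x) <= c * dot x (Q *m x).
Proof.
move=> cp QT hQ hz.
have h0 := hQ (c *: x - Q *m x); rewrite psdE mulmxBr -scalemxAr in h0.
rewrite !(dotDl, dotDr, dotNl, dotNr, dotZl, dotZr) in h0.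
have e1 : dot x (Q *m (Q *m x)) = dot (Q *m x) (Q *m x).
  by rewrite -{1}QT -dot_mul.
have e2 : dot (Q *m x) (c *: x) = c * dot x (Q *m x) by rewrite dotZr dotC.
rewrite e1 in h0.
have h1 := amgm c (Q *m x) (Q *m (Q *m x)).
have h2 := hz (Q *m x).
move: h0 h1 h2.
set g := dot (Q *m x) (Q *m x); set a := dot x (Q *m x).
set rho := dot (Q *m x) (Q *m (Q *m x)); set qq := dot (Q *m (Q *m x)) _.
move=> h0 h1 h2.
have hr : rho <= c * g.
  have : 2 * c * rho <= 2 * c * (c * g) by rewrite expr2 in h1 h2; nra.
  by rewrite ler_pM2l // mulr_gt0.
have : c * g <= c * (c * a) by nra.
by rewrite ler_pM2l.
Qed.
Lemma final_ineq {R : realFieldType} {t p U V uv ueb ebeb veb uev ebev uy ud yd Y Dd xy xd e1 E KE : R} :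
  0 <= ebeb -> 0 <= t -> 0 <= U -> 0 <= V -> 0 <= Y -> 0 <= Dd ->
  U + uv + (uv + V) <= 4 / 106 * p ->
  0 <= U + ueb + (ueb + ebeb) ->
  xy = uv + veb + (uev + ebev) ->
  0 <= p + p ->
  Dd <= 12 / 100 * (1 / 11236) * (U + ueb + (ueb + ebeb)) ->
  Y <= 1 / 11236 * (U + ueb + (ueb + ebeb)) ->
  2 * (1 / 20) * - uy <= 1 / 400 * - - U + Y ->
  2 * (1 / 20) * - ud <= 1 / 400 * - - U + Dd ->
  2 * (1 / 10) * (uev + ebev) <= 1 / 100 * (U + ueb + (ueb + ebeb)) + e1 ->
  2 * (1 / 10) * veb <= 1 / 100 * V + ebeb ->
  2 * 1 * yd <= 1 * Y + Dd ->
  2 * 1 * ueb <= 1 * U + ebeb ->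
  2 * 3 * - (uv + V) <= 9 * - (- (U + uv) - (uv + V)) + V ->
  e1 <= E -> ebeb <= E ->
  2 * xd <= 12 / 125 * (U + ueb + (ueb + ebeb) + V) + KE ->
  t - p + xy + xd + (- p - - U - uy - ud) + (xy - uy + Y + yd) + (xd - ud + yd + Dd)
   <= t + 400 * E + KE.
Proof.
move=> Heb Ht HU HV HY HDd HW Hb Hxy Hp HD2 HY2 G1 G2 G4 G5 G3 G6 G7 He1 He2 HD1.
set b := U + ueb + (ueb + ebeb) in Hb HD2 HY2 G4 HD1 *.
have A : - 2 * uy - 2 * ud + Y + 2 * yd + Dd <= 1/10 * U + 1/400 * b by clear -G1 G2 G3 HY2 HD2 Hb; lra.
have B2 : 2 * xy <= 2 * uv + 1/10 * b + 1/10 * V + 20 * E by clear -Hxy G4 G5 He1 He2; lra.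
have C : b <= 2 * U + 2 * E by clear -G6 He2; rewrite /b; lra.
have D : U <= 4 * (U + uv + (uv + V)) + 4/3 * V by clear -G7 HV; lra.
have HE : 0 <= E by clear -Heb He2; lra.
clear -A B2 C D HD1 HW Hp HV HU Hb HE.
clearbody b.
lra.
Qed.
Theorem lemma13 (R : realType) (n : nat) (A1 A2 B D : 'M[R]_n)
  (K L0 L1 L2 delta : R)
  (hK : 0 < K) (hL0 : 0 < L0) (hL1 : 0 < L1) (hL2 : 0 < L2) (hdelta : 0 < delta)
  (hA1 : psd (A1 + A1^T)) (hA2 : psd (A2 + A2^T)) (hB : psd (B + B^T))
  (nA1 : specnorm A1 <= L0) (nA2 : specnorm A2 <= L0) (nB : specnorm B <= L0)
  (hL0small : L0 <= 1 / 106%:R)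
  (hD1 : loewner_le (D + D^T)
           (L1 *: (B^T *m B + A1 *m A1^T) + (K * delta ^+ 2)%:M))
  (hD2 : loewner_le (D^T *m D) (L2 *: (B^T *m B)))
  (hv : 10%:R * L0 + 4%:R * L2 / L0 ^+ 2 + 5%:R * L1 <= 24%:R / 50%:R)
  (h12 : specnorm (A1 - A2) <= delta) (h21 : specnorm (A2 - A1) <= delta)
  (h1B : specnorm (A1 - B) <= delta) (hB1 : specnorm (B - A1) <= delta)
  (h2B : specnorm (A2 - B) <= delta) (hB2 : specnorm (B - A2) <= delta) :
  specnorm (1%:M - A1 + A2 *m B + D)
    <= Num.sqrt (1 + (400%:R + K) * delta ^+ 2).
Proof.
set c := 1 + (400%:R + K) * delta ^+ 2.
have cge1 : 1 <= c.
  rewrite /c lerDl; apply: mulr_ge0; last exact: sqr_ge0.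
  by apply: addr_ge0 => //; exact: ltW.
have key : forall x : 'cV[R]_n,
  dot ((1%:M - A1 + A2 *m B + D) *m x) ((1%:M - A1 + A2 *m B + D) *m x) <= c * dot x x.
  move=> x.
  have La : L0 <= 1/106 by [].
  have L2b : L2 <= 12/100 * L0 ^+ 2.
    have l0 : 0 < L0 ^+ 2 by rewrite exprn_gt0.
    have : 4%:R * L2 / L0 ^+ 2 <= 24%:R / 50%:R.
      have : 0 <= 4%:R * L2 / L0 ^+ 2 by apply: divr_ge0; [rewrite mulr_ge0 // ltW | apply: sqr_ge0].
      clear -hv hL0 hL1; move=> h; lra.
    rewrite ler_pdivrMr // => h; clear -h; lra.
  have L1b : L1 <= 12/125.
    have : 0 <= 4%:R * L2 / L0 ^+ 2 by apply: divr_ge0; [rewrite mulr_ge0 // ltW | apply: sqr_ge0].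
    clear -hv hL0; move=> h; lra.

  set u := A1 *m x; set v := A1^T *m x; set eb := (B - A1) *m x.
  set ev := (A2 - A1)^T *m x; set y := A2 *m (B *m x); set d := D *m x.
  have eB : B *m x = u + eb by rewrite /u /eb mulmxBl addrC subrK.
  have eA2 : A2^T *m x = v + ev.
    by rewrite /v /ev linearB /= mulmxBl addrC subrK.
  have eM : (1%:M - A1 + A2 *m B + D) *m x = x - u + y + d.
    by rewrite /u /y /d !mulmxDl mulNmx mul1mx mulmxA.
  have Ht : 0 <= dot x x := nsq_ge0 x.
  have HU : 0 <= dot u u := nsq_ge0 u.
  have HV : 0 <= dot v v := nsq_ge0 v.
  have HY : 0 <= dot y y := nsq_ge0 y.
  have HDd : 0 <= dot d d := nsq_ge0 d.
  have Hb : 0 <= dot (u + eb) (u + eb) := nsq_ge0 _.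
  have Hw : 0 <= dot (u + v) (u + v) := nsq_ge0 _.
  have He1 : dot ev ev <= delta ^+ 2 * dot x x by apply: sn_sqT.
  have He2 : dot eb eb <= delta ^+ 2 * dot x x by apply: sn_sq.
  have HY2 : dot y y <= L0 ^+ 2 * dot (u + eb) (u + eb) by rewrite /y eB; apply: sn_sq.
  have Hxv : dot x v = dot x u by rewrite /v -dot_mul dotC.
  have Hxy : dot x y = dot (v + ev) (u + eb) by rewrite /y -eA2 -eB dot_mul trmxK.
  have HD1 : 2 * dot x d <= L1 * (dot (u + eb) (u + eb) + dot v v) + K * delta ^+ 2 * dot x x.
    have h := hD1 x; rewrite psdE in h.
    have ev1 : (L1 *: (B^T *m B + A1 *m A1^T) + (K * delta ^+ 2)%:M - (D + D^T)) *m x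
       = L1 *: (B^T *m (B *m x) + A1 *m v) + (K * delta ^+ 2) *: x - (d + D^T *m x).
      by rewrite mulmxBl !mulmxDl -scalemxAl mul_scalar_mx !mulmxDl !mulmxA.
    rewrite ev1 !(dotDr, dotNr, dotZr) in h.
    have e1 : dot x (B^T *m (B *m x)) = dot (u + eb) (u + eb) by rewrite -dot_mul eB.
    have e2 : dot x (A1 *m v) = dot v v by rewrite dotC dot_mul.
    have e3 : dot x (D^T *m x) = dot x d by rewrite -dot_mul dotC.
    rewrite e1 e2 e3 in h; clear -h; lra.
  have HD2 : dot d d <= L2 * dot (u + eb) (u + eb).
    have h := hD2 x; rewrite psdE in h.
    have ev1 : (L2 *: (B^T *m B) - D^T *m D) *m x = L2 *: (B^T *m (B *m x)) - D^T *m d.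
      by rewrite mulmxBl -scalemxAl !mulmxA.
    rewrite ev1 !(dotDr, dotNr, dotZr) in h.
    have e1 : dot x (B^T *m (B *m x)) = dot (u + eb) (u + eb) by rewrite -dot_mul eB.
    have e3 : dot x (D^T *m d) = dot d d by rewrite -dot_mul.
    rewrite e1 e3 in h; clear -h; lra.
  have Hp2 : 0 <= dot x u + dot x u.
    have h := hA1 x; rewrite psdE mulmxDl dotDr -/u -/v Hxv in h; exact: h.
  have HW : dot (u + v) (u + v) <= 2 * L0 * (dot x u + dot x u).
    have eQ : (A1 + A1^T) *m x = u + v by rewrite mulmxDl.
    have -> : dot x u + dot x u = dot x ((A1 + A1^T) *m x) by rewrite eQ dotDr Hxv.
    rewrite -eQ.
    apply: psd_bound => //; first by rewrite mulr_gt0.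
      by rewrite linearD /= trmxK addrC.
    move=> z; rewrite mulmxDl !(dotDl, dotDr).
    have a1 := sn_sq A1 L0 z nA1.
    have a2 := sn_sqT A1 L0 z hL0 nA1.
    have a3 := amgm 1 (A1 *m z) (A1^T *m z).
    rewrite (dotC (A1^T *m z)) expr1n !mul1r mulr1 in a3 *.
    clear -a1 a2 a3; rewrite exprMn; lra.
  have HWa : dot (u + v) (u + v) <= 4 / 106 * dot x u.
    have h : 2 * L0 * (dot x u + dot x u) <= 2 * (1/106) * (dot x u + dot x u).
      by apply: ler_wpM2r => //; apply: ler_wpM2l.
    clear -HW h; lra.
  have HD1a : 2 * dot x d <= 12/125 * (dot (u + eb) (u + eb) + dot v v) + K * delta ^+ 2 * dot x x.
    apply: (le_trans HD1); rewrite lerD2r; apply: ler_wpM2r => //; clear -L1b Hb HV; lra.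
  have HD2a : dot d d <= 12/100 * (1/106)^+2 * dot (u + eb) (u + eb).
    apply: (le_trans HD2); apply: ler_wpM2r => //.
    apply: (le_trans L2b); apply: ler_wpM2l; first by rewrite divr_ge0.
    rewrite !expr2; apply: ler_pM; [exact: ltW | exact: ltW | exact: La | exact: La].
  have HY2a : dot y y <= (1/106)^+2 * dot (u + eb) (u + eb).
    apply: (le_trans HY2); apply: ler_wpM2r => //.
    rewrite !expr2; apply: ler_pM; [exact: ltW | exact: ltW | exact: La | exact: La].
  clearbody u v eb ev y d.
  have G1 := amgm (1/20) (- u) y.
  have G2 := amgm (1/20) (- u) d.
  have G3 := amgm 1 y d.
  have G4 := amgm (1/10) (u + eb) ev.
  have G5 := amgm (1/10) v eb.
  have G6 := amgm 1 u eb.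
  have G7 := amgm 3 (- (u + v)) v.
  rewrite eM.
  rewrite !(dotDl, dotDr, dotNl, dotNr) in HWa HD1a HD2a HY2a G1 G2 G3 G4 G5 G6 G7 Hb Hw Hxy *.
  rewrite ?(dotC u x) ?(dotC v x) ?(dotC eb x) ?(dotC ev x) ?(dotC y x) ?(dotC d x) ?(dotC v u) ?(dotC eb u) ?(dotC ev u) ?(dotC y u) ?(dotC d u) ?(dotC eb v) ?(dotC ev v) ?(dotC y v) ?(dotC d v) ?(dotC ev eb) ?(dotC y eb) ?(dotC d eb) ?(dotC y ev) ?(dotC d ev) ?(dotC d y) in HWa HD1a HD2a HY2a G1 G2 G3 G4 G5 G6 G7 Hb Hw Hxy Hp2 *.
  rewrite /c.
  clear -Ht HU HV HY HDd He1 He2 HWa HD1a HD2a HY2a G1 G2 G3 G4 G5 G6 G7 Hb Hw Hxy Hp2 hK hdelta.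
  have -> : (1 + (400 + K) * delta ^+ 2) * dot x x = dot x x + 400 * (delta ^+ 2 * dot x x) + K * delta ^+ 2 * dot x x by ring.
  have e1 : (1/106 : R)^+2 = 1/11236 by rewrite expr2; field.
  have e2 : (1/20 : R)^+2 = 1/400 by rewrite expr2; field.
  have e3 : (1/10 : R)^+2 = 1/100 by rewrite expr2; field.
  rewrite e1 in HD2a HY2a; rewrite e2 in G1 G2; rewrite e3 in G4 G5; rewrite expr1n in G3 G6.
  have e4 : (3 : R)^+2 = 9 by rewrite expr2; ring.
  rewrite e4 in G7.
  move: He1 He2 HD1a; generalize (delta ^+ 2 * dot x x) (K * delta ^+ 2 * dot x x) => E KE He1 He2 HD1a.
  have Heb := nsq_ge0 eb.
  exact: (final_ineq Heb Ht HU HV HY HDd HWa Hb Hxy Hp2 HD2a HY2a G1 G2 G4 G5 G3 G6 G7 He1 He2 HD1a).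
apply: ge_sup; first by case: (sn_has_sup (1%:M - A1 + A2 *m B + D)).
move=> _ [x /= hx <-].
have t1 : dot x x <= 1 by rewrite -(@ler_sqrt _ (dot x x) 1) // sqrtr1 -vnormE.
rewrite vnormE; apply: ler_wsqrtr; apply: (le_trans (key x)).
by rewrite ler_piMr // (le_trans ler01 cge1).
Qed.
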